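(* Let $\Psi=\begin{bmatrix}\Psi_{11}&\Psi_{12}\\ \Psi_{12}^\top&\Psi_{22}\end{bmatrix}\in\mathbb{R}^{(p+q)\times(p+q)}$ be symmetric with $\Psi_{11}\in\mathbb{R}^{p\times p}$, such that $\Psi_{11}-\Psi_{12}\Psi_{22}^{-1}\Psi_{12}^\top>0$ and $\Psi_{22}<0$. Let $W\in\mathbb{R}^{p\times r}$ be a full rank matrix with $r\le p$. Suppose $Z_W\in\mathbb{R}^{r\times q}$ satisfies $$\begin{bmatrix}I\\Z_W^\top\end{bmatrix}^\top\begin{bmatrix}W^\top\Psi_{11}W&W^\top\Psi_{12}\\ \Psi_{12}^\top W&\Psi_{22}\end{bmatrix}\begin{bmatrix}I\\Z_W^\top\end{bmatrix}\ge0.$$ Then there exists $Z\in\mathbb{R}^{p\times q}$ such that $Z^\top W=Z_W^\top$ and $$\begin{bmatrix}I\\Z^\top\end{bmatrix}^\top\Psi\begin{bmatrix}I\\Z^\top\end{bmatrix}\ge0.$$ *)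

(* Defs.v *)
From mathcomp Require Import all_boot all_order all_algebra.
Set Implicit Arguments. Unset Strict Implicit. Unset Printing Implicit Defensive.
Import Order.TTheory GRing.Theory Num.Theory.
Local Open Scope ring_scope.

Definition psdmx (R : realFieldType) (n : nat) (A : 'M[R]_n) : Prop :=
  forall x : 'cV[R]_n, 0 <= (x^T *m A *m x) 0 0.

Definition pdmx (R : realFieldType) (n : nat) (A : 'M[R]_n) : Prop :=
  forall x : 'cV[R]_n, x != 0 -> 0 < (x^T *m A *m x) 0 0.

Definition ndmx (R : realFieldType) (n : nat) (A : 'M[R]_n) : Prop :=
  pdmx (- A).

(* Main.v *)
Require Import Defs.
From mathcomp Require Import all_boot all_order all_algebra.
From mathcomp Require Import lra.
Import Order.TTheory GRing.Theory Num.Theory.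
Local Open Scope ring_scope.

Section H.
Variable R : realFieldType.

Lemma unit_of_nondeg n (A : 'M[R]_n) :
  (forall u : 'rV_n, u *m A = 0 -> u = 0) -> A \in unitmx.
Proof.
move=> H; rewrite -row_free_unit -kermx_eq0; apply/eqP/matrixP => i j.
have := H (row i (kermx A)); rewrite -row_mul mulmx_ker row0 => /(_ erefl) /rowP/(_ j).
by rewrite !mxE.
Qed.

Lemma quad_block n q (A : 'M[R]_n) (B : 'M[R]_(n,q)) (Dd : 'M[R]_q) (X : 'M[R]_(q,n)) :
 (col_mx 1%:M X)^T *m block_mx A B B^T Dd *m col_mx 1%:M X
  = A + B *m X + X^T *m B^T + X^T *m Dd *m X.
Proof.
rewrite tr_col_mx trmx1 mul_row_block !mul1mx mul_row_col !mulmx1 mulmxDl.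
by rewrite !addrA; congr (_ + _); rewrite -!addrA; congr (_ + _); rewrite addrC.
Qed.

Lemma zmod4 (V : zmodType) (a b c d e : V) : a + b + c + d = (a - e) + (d + c + b + e).
Proof.
by rewrite [d + c + b + e]addrC addrA addrNK -!addrA; congr (a + _); rewrite [RHS]addrC [c + b]addrC addrA.
Qed.

Lemma complete_sq n q (A : 'M[R]_n) (B : 'M[R]_(n,q)) (Dd : 'M[R]_q) (Y : 'M[R]_(n,q)) :
  Dd^T = Dd -> Dd \in unitmx ->
  A + B *m Y^T + Y *m B^T + Y *m Dd *m Y^T
  = (A - B *m invmx Dd *m B^T) + (Y + B *m invmx Dd) *m Dd *m (Y + B *m invmx Dd)^T.
Proof.
move=> sD uD.
rewrite (zmod4 _ _ _ _ _ (B *m invmx Dd *m B^T)); congr (_ + _).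
rewrite raddfD /= trmx_mul trmx_inv sD !mulmxDl !mulmxDr -!addrA; congr (_ + _).
by rewrite -!mulmxA !mulKVmx // !mulKmx.
Qed.


Lemma pd_psd n (A : 'M[R]_n) : pdmx A -> psdmx A.
Proof.
move=> H x; case: (eqVneq x 0) => [->|nz]; last exact/ltW/H.
by rewrite trmx0 !mul0mx mxE.
Qed.

Lemma qD n (x : 'cV[R]_n) (A B : 'M[R]_n) :
  (x^T *m (A + B) *m x) 0 0 = (x^T *m A *m x) 0 0 + (x^T *m B *m x) 0 0.
Proof. by rewrite mulmxDr mulmxDl mxE. Qed.

Lemma key n r (S : 'M[R]_n) (W : 'M[R]_(n,r)) (x : 'cV[R]_n) (y : 'cV[R]_r) :
  S^T = S -> psdmx S -> W^T *m S *m W *m y = W^T *m S *m x ->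
  (y^T *m (W^T *m S *m W) *m y) 0 0 <= (x^T *m S *m x) 0 0.
Proof.
move=> sS psd hy.
set v := W *m y.
have h1 : (v^T *m S *m x) 0 0 = (y^T *m (W^T *m S *m W) *m y) 0 0.
  rewrite /v trmx_mul !mulmxA.
  have -> : y^T *m W^T *m S *m W *m y = y^T *m (W^T *m S *m W *m y) by rewrite !mulmxA.
  by rewrite hy !mulmxA.
have h2 : (v^T *m S *m v) 0 0 = (y^T *m (W^T *m S *m W) *m y) 0 0.
  by rewrite /v trmx_mul !mulmxA.
have h3 : (x^T *m S *m v) 0 0 = (v^T *m S *m x) 0 0.
  have -> : (x^T *m S *m v) 0 0 = ((x^T *m S *m v)^T) 0 0 by rewrite [in RHS]mxE.
  by rewrite !trmx_mul trmxK sS mulmxA.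
have := psd (x - v).
have mB (a b : 'M[R]_1) : (a - b) 0 0 = a 0 0 - b 0 0 by rewrite !mxE.
rewrite mulmxBr raddfB /= !mulmxBl !mB h3 h1 h2 -h1.
lra.
Qed.

End H.

Theorem lemmaA4 (R : realFieldType) (p q r : nat)
  (Psi11 : 'M[R]_p) (Psi12 : 'M[R]_(p, q)) (Psi22 : 'M[R]_q)
  (W : 'M[R]_(p, r)) (ZW : 'M[R]_(r, q)) :
  Psi11^T = Psi11 -> Psi22^T = Psi22 ->
  pdmx (Psi11 - Psi12 *m invmx Psi22 *m Psi12^T) ->
  ndmx Psi22 ->
  (r <= p)%N -> \rank W = r ->
  psdmx ((col_mx (1%:M : 'M[R]_r) ZW^T)^T
           *m block_mx (W^T *m Psi11 *m W) (W^T *m Psi12) (Psi12^T *m W) Psi22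
           *m col_mx (1%:M : 'M[R]_r) ZW^T) ->
  exists Z : 'M[R]_(p, q),
    Z^T *m W = ZW^T /\
    psdmx ((col_mx (1%:M : 'M[R]_p) Z^T)^T
             *m block_mx Psi11 Psi12 Psi12^T Psi22
             *m col_mx (1%:M : 'M[R]_p) Z^T).
Proof.
move=> s11 s22 pdS nd22 _ rkW hG.
have u22 : Psi22 \in unitmx.
  apply: unit_of_nondeg => u hu; apply/eqP/negPn/negP => nz.
  have := nd22 u^T; rewrite trmx_eq0 => /(_ nz).
  by rewrite trmxK mulmxN hu oppr0 mul0mx mxE ltxx.
set S := Psi11 - Psi12 *m invmx Psi22 *m Psi12^T.
have sS : S^T = S.
  by rewrite /S raddfB /= s11 !trmx_mul trmxK trmx_inv s22 mulmxA.
set M := W^T *m S *m W.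
have rfW : row_free W^T by rewrite -row_leq_rank mxrank_tr rkW.
have uM : M \in unitmx.
  apply: unit_of_nondeg => u hu; apply/eqP/negPn/negP => nz.
  have nz2 : W *m u^T != 0.
    by rewrite -trmx_eq0 trmx_mul trmxK mulmx_free_eq0.
  have := pdS (W *m u^T) nz2.
  have -> : (W *m u^T)^T *m S *m (W *m u^T) = u *m M *m u^T.
    by rewrite trmx_mul trmxK /M !mulmxA.
  by rewrite hu mul0mx mxE ltxx.
have sM : M^T = M by rewrite /M !trmx_mul sS trmxK mulmxA.
set E := ZW + W^T *m Psi12 *m invmx Psi22.
set D := S *m W *m invmx M *m E.
exists (D - Psi12 *m invmx Psi22).
have WZ : W^T *m (D - Psi12 *m invmx Psi22) = ZW.
  rewrite mulmxBr /D !mulmxA -/M mulmxV // mul1mx /E addrK.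
  done.
split.
  by have := congr1 trmx WZ; rewrite trmx_mul trmxK.
move=> x.
rewrite quad_block trmxK complete_sq // addrNK -/S qD.
have eT : Psi12^T *m W = (W^T *m Psi12)^T by rewrite trmx_mul trmxK.
rewrite eT quad_block trmxK complete_sq // in hG.
have eM : W^T *m Psi11 *m W - W^T *m Psi12 *m invmx Psi22 *m (W^T *m Psi12)^T = M.
  by rewrite /M /S mulmxBr mulmxBl trmx_mul trmxK !mulmxA.
rewrite eM -/E in hG.
set y := invmx M *m W^T *m S *m x.
have := hG y; rewrite qD.
have -> : x^T *m (D *m Psi22 *m D^T) *m x = (E^T *m y)^T *m Psi22 *m (E^T *m y).
  by rewrite /D /y !trmx_mul trmx_inv sM sS !trmxK !mulmxA.
have -> : y^T *m (E *m Psi22 *m E^T) *m y = (E^T *m y)^T *m Psi22 *m (E^T *m y).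
  by rewrite !trmx_mul !trmxK !mulmxA.
have hk := @key R _ _ S W x y sS (@pd_psd R _ S pdS).
have : (y^T *m M *m y) 0 0 <= (x^T *m S *m x) 0 0.
  apply: hk.
  have -> : W^T *m S *m W *m y = M *m (invmx M *m (W^T *m S *m x)) by rewrite /y /M !mulmxA.
  by rewrite mulKVmx.
lra.
Qed.
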